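(* Suppose a three-link protocol given by maps $s_{AB},s_{AC},s_{BC}$ (and decision functions) solves MEQ-AD$(3,M)$. Then the map $x\mapsto (s_{AB}(x),s_{AC}(x))$ on $\{1,\dots,M\}$ is injective; equivalently, in the associated bipartite graph $G(U,V,E)$ each edge corresponds to exactly one input value. Hence $|E|=M$ and $|U|\cdot|V|\ge M$.
   Context: Three nodes $A,B,C$ hold inputs $x_A,x_B,x_C\in\{1,\dots,M\}$. A three-link protocol is given by maps $s_{AB},s_{AC},s_{BC}$ from $\{1,\dots,M\}$ to finite sets: $A$ sends $s_{AB}(x_A)$ to $B$ and $s_{AC}(x_A)$ to $C$, and $B$ sends $s_{BC}(x_B)$ to $C$ (private point-to-point links). Each node outputs a bit: $EQ_A$ is a function of $x_A$, $EQ_B$ a function of $(x_B,s_{AB}(x_A))$, and $EQ_C$ a function of $(x_C,s_{AC}(x_A),s_{BC}(x_B))$. The protocol solves MEQ-AD$(3,M)$ if for all inputs, $EQ_A=EQ_B=EQ_C=0$ holds iff $x_A=x_B=x_C$. Its complexity is $\log_2(|s_{AB}|\cdot|s_{AC}|\cdot|s_{BC}|)$, where $|s_{ij}|$ is the size of the range of $s_{ij}$. The associated simple bipartite graph $G(U,V,E)$ has vertex sets $U=\{U_i: i \text{ in the range of } s_{AB}\}$, $V=\{V_j: j\text{ in the range of } s_{AC}\}$, and an edge $(U_i,V_j)\in E$ iff $i=s_{AB}(x)$ and $j=s_{AC}(x)$ for some $x$; the edge $(U_{s_{AB}(x)},V_{s_{AC}(x)})$ is said to correspond to $x$. *)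

(* Defs.v *)
(* Inputs {1,...,M} are modelled by 'I_M = {0,...,M-1}. *)
From mathcomp Require Import all_boot.
Set Implicit Arguments. Unset Strict Implicit. Unset Printing Implicit Defensive.

Definition solves_MEQ_AD3 (M : nat) (TAB TAC TBC : finType)
  (sAB : 'I_M -> TAB) (sAC : 'I_M -> TAC) (sBC : 'I_M -> TBC)
  (EQA : 'I_M -> bool) (EQB : 'I_M -> TAB -> bool)
  (EQC : 'I_M -> TAC -> TBC -> bool) : Prop :=
  forall xA xB xC : 'I_M,
    [&& EQA xA == false, EQB xB (sAB xA) == false
      & EQC xC (sAC xA) (sBC xB) == false] <-> (xA = xB /\ xB = xC).

Definition Uset (M : nat) (TAB : finType) (sAB : 'I_M -> TAB) : {set TAB} :=
  [set sAB x | x : 'I_M].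
Definition Vset (M : nat) (TAC : finType) (sAC : 'I_M -> TAC) : {set TAC} :=
  [set sAC x | x : 'I_M].
Definition Eset (M : nat) (TAB TAC : finType) (sAB : 'I_M -> TAB)
  (sAC : 'I_M -> TAC) : {set TAB * TAC} :=
  [set (sAB x, sAC x) | x : 'I_M].

(* Main.v *)
Require Import Defs.
From mathcomp Require Import all_boot.

Theorem lemma3 (M : nat) (TAB TAC TBC : finType)
  (sAB : 'I_M -> TAB) (sAC : 'I_M -> TAC) (sBC : 'I_M -> TBC)
  (EQA : 'I_M -> bool) (EQB : 'I_M -> TAB -> bool)
  (EQC : 'I_M -> TAC -> TBC -> bool) :
  solves_MEQ_AD3 sAB sAC sBC EQA EQB EQC ->
  injective (fun x : 'I_M => (sAB x, sAC x)) /\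
  #|Eset sAB sAC| = M /\
  M <= #|Uset sAB| * #|Vset sAC|.
Proof.
move=> H.
have inj : injective (fun x : 'I_M => (sAB x, sAC x)).
  move=> y x [e1 e2].
  have /and3P[_ hb hc] : [&& EQA x == false, EQB x (sAB x) == false
      & EQC x (sAC x) (sBC x) == false] by apply/H.
  have /and3P[ha _ _] : [&& EQA y == false, EQB y (sAB y) == false
      & EQC y (sAC y) (sBC y) == false] by apply/H.
  have [] : y = x /\ x = x.
    apply/H; rewrite ha e1 e2 hb hc //.
  by [].
have cE : #|Eset sAB sAC| = M.
  by rewrite /Eset card_imset // card_ord.
split=> //; split=> //.
rewrite -cardsX; apply: (@leq_trans #|Eset sAB sAC|); first by rewrite cE.
apply: subset_leq_card.
apply/subsetP=> p /imsetP[x _ ->].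
by rewrite in_setX /Uset /Vset !imset_f.
Qed.
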